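(* Let $X$ be a real Banach space and $\varphi\colon X\to(-\infty,\infty]$ a closed (lower semicontinuous), convex, proper function. Then $\varphi$ is an Orlicz function on $X$ if and only if its convex conjugate $\varphi^*\colon X^*\to(-\infty,\infty]$, $\varphi^*(x')=\sup_{x\in X}(\langle x',x\rangle-\varphi(x))$, is an Orlicz function on $X^*$.
   Context: An Orlicz function on a Banach space $Z$ is an even, convex, lower semicontinuous, proper function $\psi\colon Z\to(-\infty,\infty]$ such that $\lim_{z\to 0}\psi(z)=0$ and $\lim_{\|z\|\to\infty}\psi(z)=+\infty$ (such a function is automatically nonnegative). *)

(* Defs.v *)
From HB Require Import structures.
From mathcomp Require Import all_boot all_order all_algebra.
From mathcomp Require Import all_classical all_reals all_analysis.
Set Implicit Arguments. Unset Strict Implicit. Unset Printing Implicit Defensive.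
Import Order.TTheory GRing.Theory Num.Theory.
Import numFieldNormedType.Exports.
Local Open Scope classical_set_scope.
Local Open Scope ring_scope.

(* Properties of an extended-real valued function psi on a (semi)normed real
   vector space (V, N), where the relevant points are those of a linear
   subspace D of V (D = setT for X itself, D = continuous linear functionals
   for the dual X^* seen inside the function space X -> R). *)
Section OrliczDefs.
Context {R : realType} {V : lmodType R}.
Variables (D : set V) (N : V -> R) (psi : V -> \bar R).
Local Open Scope ereal_scope.

Definition even_on := forall z, D z -> psi (- z) = psi z.

Definition convex_on := forall (x y : V) (t : R), D x -> D y ->
  (0 < t < 1)%R ->
  psi (t *: x + (1 - t) *: y) <= t%:E * psi x + (1 - t)%:E * psi y.

Definition lsc_on := forall z, D z -> forall a : R, a%:E < psi z ->
  exists2 d : R, (0 < d)%R &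
    forall w, D w -> (N (w - z) < d)%R -> a%:E < psi w.

Definition proper_on := (forall z, D z -> psi z != -oo) /\
  (exists z, D z /\ psi z != +oo).

Definition lim0_on := forall e : R, (0 < e)%R ->
  exists2 d : R, (0 < d)%R &
    forall z, D z -> (N z < d)%R -> (- e%:E < psi z) /\ (psi z < e%:E).

Definition coercive_on := forall M : R, exists r : R,
  forall z, D z -> (r < N z)%R -> M%:E < psi z.

Definition Orlicz_on := even_on /\ convex_on /\ lsc_on /\ proper_on /\
  lim0_on /\ coercive_on.

End OrliczDefs.

Section Dual.
Context {R : realType} {X : normedModType R}.

Definition is_linear_functional (f : X -> R^o) :=
  forall (a : R) (x y : X), f (a *: x + y) = a * f x + f y.

Definition dual_space : set (X -> R^o) :=
  [set f | is_linear_functional f /\ continuous f].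

Definition dual_norm (f : X -> R^o) : R :=
  sup [set `|f x| | x in [set x : X | `|x| <= 1]].

Definition conjugate (phi : X -> \bar R) (f : X -> R^o) : \bar R :=
  ereal_sup [set ((f x)%:E - phi x)%E | x in [set: X]].

End Dual.

(* Main.v *)
Require Import Defs.
From HB Require Import structures.
From mathcomp Require Import all_boot all_order all_algebra.
From mathcomp Require Import all_classical all_reals all_analysis.
From mathcomp Require Import ring lra.
Import Order.TTheory GRing.Theory Num.Theory.
Import numFieldNormedType.Exports.
Local Open Scope classical_set_scope.
Local Open Scope ring_scope.
Section HB.
Context {R : realType} {V : lmodType R} (G : V -> R).
Hypothesis Gconv : forall x y (t : R), 0 < t < 1 ->
  G (t *: x + (1 - t) *: y) <= t * G x + (1 - t) * G y.
Hypothesis G0 : 0 <= G 0.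

Definition PHB (A : set (V * R)) :=
  [/\ forall x r s, A (x, r) -> A (x, s) -> r = s,
      forall a x y r s, A (x, r) -> A (y, s) -> A (a *: x + y, a * r + s) &
      forall x r, A (x, r) -> r <= G x].

Lemma PHB_chain (F : set (set (V * R))) : F `<=` PHB -> total_on F subset ->
  PHB (\bigcup_(X in F) X).
Proof.
move=> FP Ftot; split.
- move=> x r s [X FX Xr] [Y FY Ys].
  have [XY|YX] := Ftot X Y FX FY.
    by have [h _ _] := FP Y FY; apply: (h x); [apply: XY|].
  by have [h _ _] := FP X FX; apply: (h x); [|apply: YX].
- move=> a x y r s [X FX Xr] [Y FY Ys].
  have [XY|YX] := Ftot X Y FX FY.
    by have [_ h _] := FP Y FY; exists Y => //; apply: h => //; apply: XY.
  by have [_ h _] := FP X FX; exists X => //; apply: h => //; apply: YX.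
- by move=> x r [X FX Xr]; have [_ _ h] := FP X FX; exact: h.
Qed.

Lemma HB_key (A : set (V * R)) (v m m' : V) (r r' s t : R) : PHB A ->
  A (m, r) -> A (m', r') -> 0 < s -> 0 < t ->
  (r - G (m - s *: v)) / s <= (G (m' + t *: v) - r') / t.
Proof.
rewrite /PHB => -[_ Acl Adom] Amr Amr' s0 t0.
set l := t / (s + t).
have st0 : 0 < s + t by rewrite addr_gt0.
have l0 : 0 < l by rewrite divr_gt0.
have l1 : l < 1 by rewrite ltr_pdivrMr // mul1r ltrDr.
have ls : l * s = (1 - l) * t.
  rewrite /l; field; rewrite gt_eqF //.
have A00 : A (0, 0).
  have := Acl (-1) m' m' r' r' Amr' Amr'.
  by rewrite scaleN1r addNr mulN1r addNr.
have Aw : A (l *: m + ((1 - l) *: m' + 0), l * r + ((1 - l) * r' + 0)).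
  by apply: (Acl) => //; apply: (Acl).
have ew : l *: m + ((1 - l) *: m' + 0) = l *: (m - s *: v) + (1 - l) *: (m' + t *: v).
  rewrite addr0 !scalerDr scalerN !scalerA ls.
  by rewrite addrACA addNr addr0.
rewrite ew in Aw; move: Aw => /Adom /le_trans /(_ (Gconv (m - s *: v) (m' + t *: v) l (introT andP (conj l0 l1)))) H.
rewrite ler_pdivrMr // mulrAC ler_pdivlMr //.
have e1 : 1 - l = s / (s + t) by rewrite /l; field; rewrite gt_eqF.
move: H; rewrite e1 /l => H.
have : (t * r + s * r') <= t * G (m - s *: v) + s * G (m' + t *: v).
  have := ler_wpM2r (ltW st0) H.
  have k : forall a X, a / (s + t) * X * (s + t) = a * X.
    by move=> a X; field; rewrite gt_eqF.
  by rewrite !addr0 !mulrDl !k.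
nra.
Qed.
Lemma HB_exists : exists f : V -> R,
  (forall a x y, f (a *: x + y) = a * f x + f y) /\ forall x, f x <= G x.
Proof.
have [A [PA Amax]] := @Zorn_bigcup _ PHB PHB_chain.
have [Afun Acl Adom] := PA.
have Ane : exists p, A p.
  apply: contrapT => Ane.
  apply: (Amax [set (0, 0)]).
    split; first by move=> p Ap; exfalso; apply: Ane; exists p.
    by move=> /(_ (0, 0) erefl) A00; apply: Ane; exists (0, 0).
  split.
  - by move=> x r s [_ ->] [_ ->].
  - by move=> a x y r s [-> ->] [-> ->]; rewrite scaler0 mulr0 !addr0.
  - by move=> x r [-> ->].
have A00 : A (0, 0).
  case: Ane => -[m r] Amr.
  have := Acl (-1) m m r r Amr Amr.
  by rewrite scaleN1r addNr mulN1r addNr.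
have dom : forall v, exists r, A (v, r).
  move=> v; apply: contrapT => /forallNP nv.
  pose L := [set y | exists m r s, [/\ A (m, r), 0 < s & y = (r - G (m - s *: v)) / s]].
  have L0 : L ((0 - G (0 - 1 *: v)) / 1) by exists 0, 0, 1.
  have Lub : forall y, L y -> forall m' r' t, A (m', r') -> 0 < t ->
      y <= (G (m' + t *: v) - r') / t.
    move=> y [m [r [s [Amr s0 ->]]]] m' r' t Am' t0.
    exact: (HB_key A v m m' r r' s t PA Amr Am' s0 t0).
  have hsL : has_ubound L.
    by exists ((G (0 + 1 *: v) - 0) / 1) => y Ly; apply: (Lub y Ly _ _ _ A00 ltr01).
  set al := sup L.
  have alU : forall m' r' t, A (m', r') -> 0 < t -> al <= (G (m' + t *: v) - r') / t.
    move=> m' r' t Am t0; apply: ge_sup; first by exists ((0 - G (0 - 1 *: v)) / 1).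
    by move=> y Ly; apply: Lub.
  have alL : forall y, L y -> y <= al by move=> y Ly; apply: ub_le_sup.
  pose B := [set p | exists m r t, A (m, r) /\ p = (m + t *: v, r + t * al)].
  apply: (Amax B).
    split.
    - move=> [m r] Amr; exists m, r, 0; split => //.
      by rewrite scale0r mul0r !addr0.
    - move=> /(_ (v, al)) h.
      have : B (v, al) by exists 0, 0, 1; rewrite add0r scale1r mul1r add0r.
      by move/h => Av; exact: (nv al Av).
  split.
  - move=> x r1 r2 [m [r [t [Amr [ex ->]]]]] [m' [r' [t' [Amr' [ex' ->]]]]].
    case: (eqVneq t t') => [tt'|ntt'].
      subst t'; have mm : m = m' by move: ex'; rewrite ex => /addIr.
      by subst m'; rewrite (Afun _ _ _ Amr Amr').
    exfalso; apply: (nv ((t' - t)^-1 * ((-1) * r' + r) + 0)).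
    have := Acl ((t' - t)^-1) _ _ _ _ (Acl (-1) _ _ _ _ Amr' Amr) A00.
    suff ev : (t' - t)^-1 *: ((-1) *: m' + m) + 0 = v by rewrite ev.
    have e : m = m' + t' *: v - t *: v by rewrite -ex' ex addrK.
    rewrite addr0 e scaleN1r addrA addKr -scalerBl scalerA mulVf ?scale1r //.
    by rewrite subr_eq0 eq_sym.
  - move=> a x y r1 r2 [m [r [t [Amr [-> ->]]]]] [m' [r' [t' [Amr' [-> ->]]]]].
    exists (a *: m + m'), (a * r + r'), (a * t + t'); split; first exact: Acl.
    congr pair; last by ring.
    by rewrite scalerDr scalerDl scalerA addrACA.
  - move=> x r1 [m [r [t [Amr [-> ->]]]]].
    case: (ltgtP t 0) => [tn|tp|->].
    + have Ly : L ((r - G (m - (- t) *: v)) / (- t)).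
        by exists m, r, (- t); split => //; rewrite oppr_gt0.
      have := alL _ Ly; rewrite scaleNr opprK ler_pdivrMr ?oppr_gt0 // => h.
      lra.
    + have := alU m r t Amr tp; rewrite ler_pdivlMr // => h.
      lra.
    + by rewrite scale0r addr0 mul0r addr0; exact: Adom.
pose f v := sval (cid (dom v)).
have fA : forall v, A (v, f v) by move=> v; exact: svalP (cid (dom v)).
exists f; split.
  by move=> a x y; exact: (Afun _ _ _ (fA (a *: x + y)) (Acl a x y _ _ (fA x) (fA y))).
by move=> x; exact: Adom (fA x).
Qed.
End HB.
Section Lin.
Context {R : realType} {X : normedModType R} (f : X -> R^o).
Hypothesis lf : is_linear_functional f.

Lemma lin0 : f 0 = 0.
Proof.
have := lf 1 0 0; rewrite scale1r addr0 mul1r => h; lra.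
Qed.

Lemma linZ a x : f (a *: x) = a * f x.
Proof. by have := lf a x 0; rewrite addr0 lin0 addr0. Qed.

Lemma linD x y : f (x + y) = f x + f y.
Proof. by have := lf 1 x y; rewrite scale1r mul1r. Qed.

Lemma linN x : f (- x) = - f x.
Proof. by rewrite -scaleN1r linZ mulN1r. Qed.

Lemma linB x y : f (x - y) = f x - f y.
Proof. by rewrite linD linN. Qed.

Lemma lin_bound_cont (C : R) : (forall x, `|f x| <= C * `|x|) -> continuous f.
Proof.
move=> fb x; apply/cvgrPdist_lt => e e0; apply/nbhs_normP.
have C1 : 0 < `|C| + 1 by rewrite ltr_wpDl.
exists (e / (`|C| + 1)); first by rewrite /= divr_gt0.
move=> y /= hy; rewrite -linB.
apply: (le_lt_trans (fb _)).
apply: (le_lt_trans (y := (`|C| + 1) * `|x - y|)).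
  by rewrite ler_wpM2r // (le_trans (ler_norm C)) // lerDl.
by rewrite mulrC -ltr_pdivlMr.
Qed.

Lemma lin_cont_bound : continuous f -> exists2 C, 0 < C & forall x, `|f x| <= C * `|x|.
Proof.
move=> cf.
have := cf 0; move=> /cvgrPdist_lt /(_ 1 ltr01) /nbhs_normP [d /= d0 hd].
exists (2 / d); first by rewrite divr_gt0.
move=> x; have [->|x0] := eqVneq x 0; first by rewrite lin0 !normr0 mulr0.
have nx : 0 < `|x| by rewrite normr_gt0.
set s := d / (2 * `|x|).
have s0 : 0 < s by rewrite divr_gt0 // mulr_gt0.
have : `|f 0 - f (s *: x)| < 1.
  apply: hd => /=; rewrite sub0r normrN normrZ gtr0_norm //.
  have -> : s * `|x| = d / 2 by rewrite /s; field; rewrite gt_eqF.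
  lra.
rewrite lin0 sub0r normrN linZ normrM gtr0_norm // => h.
have e1 : s * (2 / d * `|x|) = 1.
  by rewrite /s; field; rewrite !gt_eqF.
have e : s * `|f x| < s * (2 / d * `|x|) by rewrite e1.
by apply: ltW; rewrite -(ltr_pM2l s0).
Qed.
End Lin.
Section CFM.
Context {R : realType} {X : normedModType R} (phi : X -> \bar R).
Hypotheses (phic : convex_on setT phi)
  (phil : lsc_on setT (fun x : X => `|x|) phi) (phip : proper_on setT phi).

Lemma phi_nNy x : phi x != -oo%E.
Proof. by have [h _] := phip; exact: h. Qed.

Lemma phi_lb : exists (x1 : X) (c K : R), [/\ 0 <= K, phi x1 \is a fin_num &
  forall y, ((c - K * `|y - x1|)%:E <= phi y)%E].
Proof.
have [_ [x1 [_ fx1]]] := phip.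
have nx1 := phi_nNy x1.
case E: (phi x1) nx1 fx1 => [m1| |] // _ _.
have : ((m1 - 1)%:E < phi x1)%E by rewrite E lte_fin ltrBlDr ltrDl.
move=> /(phil x1 I) [d d0 hd].
exists x1, (m1 - 1), (2 / d); split; [by rewrite ltW // divr_gt0|by rewrite E|].
move=> y; case: (ltP `|y - x1| d) => h.
  apply: ltW; apply: le_lt_trans (hd y I h).
  by rewrite lee_fin lerBlDr lerDl mulr_ge0 // ltW // divr_gt0.
set Rr := `|y - x1|.
have Rr0 : 0 < Rr by apply: lt_le_trans h.
set s := d / (2 * Rr).
have s0 : 0 < s by rewrite divr_gt0 // mulr_gt0.
have s1 : s < 1.
  rewrite /s ltr_pdivrMr ?mulr_gt0 // mul1r.
  apply: (le_lt_trans h); rewrite mulr_natl mulr2n ltrDr //.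
have hz : `|s *: y + (1 - s) *: x1 - x1| < d.
  have -> : s *: y + (1 - s) *: x1 - x1 = s *: (y - x1).
    by rewrite scalerBl scale1r scalerBr addrA addrAC addrK.
  rewrite normrZ gtr0_norm // -/Rr.
  have -> : s * Rr = d / 2 by rewrite /s; field; rewrite gt_eqF.
  lra.
have h1 := hd _ I hz.
have h2 := phic y x1 s I I (introT andP (conj s0 s1)).
have ny := phi_nNy y.
case Ey: (phi y) ny h2 => [py| |] // _; last by rewrite leey.
rewrite E -!EFinM -EFinD => h2.
have h3 := lt_le_trans h1 h2; rewrite lte_fin in h3.
rewrite lee_fin.
have hs : 2 / d * Rr = s^-1 by rewrite /s; field; rewrite !gt_eqF.
rewrite hs.
have : 0 < s * (py - m1 + s^-1) by rewrite mulrDr mulfV ?gt_eqF //; lra.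
rewrite pmulr_rgt0 // => h4.
lra.
Qed.

Section Reg.
Variables (x1 : X) (c K k : R).
Hypotheses (K0 : 0 <= K) (Kk : K <= k) (fx1 : phi x1 \is a fin_num)
  (lb : forall y, ((c - K * `|y - x1|)%:E <= phi y)%E).

Definition Sreg x := [set fine (phi y) + k * `|x - y| | y in [set y | phi y \is a fin_num]].
Definition greg x := inf (Sreg x).

Let k0 : 0 <= k. Proof. exact: le_trans Kk. Qed.

Lemma Sreg_lb x : lbound (Sreg x) (c - K * `|x - x1|).
Proof.
move=> _ [y fy <-]; have := lb y; rewrite -(fineK fy) lee_fin => hy.
have tri : `|y - x1| <= `|x - y| + `|x - x1|.
  by rewrite (le_trans (ler_distD x _ _)) // distrC.
have h1 : K * `|y - x1| <= K * (`|x - y| + `|x - x1|) by rewrite ler_wpM2l.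
have h2 : K * `|x - y| <= k * `|x - y| by rewrite ler_wpM2r.
lra.
Qed.

Lemma Sreg_ne x : Sreg x !=set0.
Proof. by exists (fine (phi x1) + k * `|x - x1|), x1. Qed.

Lemma Sreg_hlb x : has_lbound (Sreg x).
Proof. by exists (c - K * `|x - x1|); exact: Sreg_lb. Qed.

Lemma greg_le x s : Sreg x s -> greg x <= s.
Proof. by move=> Ss; exact: (ge_inf (Sreg_hlb x)). Qed.

Lemma greg_ge x l : (forall s, Sreg x s -> l <= s) -> l <= greg x.
Proof. by move=> h; apply: lb_le_inf; [exact: Sreg_ne|exact: h]. Qed.

Lemma greg_phi x : phi x \is a fin_num -> greg x <= fine (phi x).
Proof.
move=> fx; apply: greg_le; exists x => //.
by rewrite subrr normr0 mulr0 addr0.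
Qed.

Lemma greg_lip x x' : greg x <= greg x' + k * `|x - x'|.
Proof.
rewrite -lerBlDr; apply: greg_ge => _ [y fy <-]; rewrite lerBlDr.
apply: (le_trans (greg_le x (fine (phi y) + k * `|x - y|) _)).
  by exists y.
have tri : `|x - y| <= `|x - x'| + `|x' - y| by exact: ler_distD.
have h1 : k * `|x - y| <= k * (`|x - x'| + `|x' - y|) by rewrite ler_wpM2l.
lra.
Qed.

Lemma greg_conv x x' t : 0 < t < 1 ->
  greg (t *: x + (1 - t) *: x') <= t * greg x + (1 - t) * greg x'.
Proof.
move=> /andP[t0 t1].
set w := t *: x + (1 - t) *: x'.
have key : forall y y', phi y \is a fin_num -> phi y' \is a fin_num ->
    greg w <= t * (fine (phi y) + k * `|x - y|) + (1 - t) * (fine (phi y') + k * `|x' - y'|).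
  move=> y y' fy fy'.
  set z := t *: y + (1 - t) *: y'.
  have hc := phic y y' t I I (introT andP (conj t0 t1)).
  rewrite -(fineK fy) -(fineK fy') -!EFinM -EFinD in hc.
  have nz := phi_nNy z.
  rewrite -/z in hc.
  case Ez: (phi z) nz hc => [pz| |] // _; rewrite lee_fin => hc.
  have gz : greg w <= pz + k * `|w - z|.
    by apply: greg_le; rewrite /Sreg; exists z; rewrite /= Ez.
  have ewz : w - z = t *: (x - y) + (1 - t) *: (x' - y').
    by rewrite /w /z !scalerBr opprD addrACA.
  have nwz : `|w - z| <= t * `|x - y| + (1 - t) * `|x' - y'|.
    by rewrite ewz (le_trans (ler_normD _ _)) // !normrZ !gtr0_norm // subr_gt0.
  have h1 : k * `|w - z| <= k * (t * `|x - y| + (1 - t) * `|x' - y'|) by have := ler_wpM2l k0 nwz.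
  lra.
have t0' : 0 < 1 - t by rewrite subr_gt0.
have step1 : forall y', phi y' \is a fin_num ->
    greg w <= t * greg x + (1 - t) * (fine (phi y') + k * `|x' - y'|).
  move=> y' fy'.
  suff : (greg w - (1 - t) * (fine (phi y') + k * `|x' - y'|)) / t <= greg x.
    rewrite ler_pdivrMr // => h; lra.
  apply: greg_ge => _ [y fy <-]; rewrite ler_pdivrMr //.
  have := key y y' fy fy'; lra.
suff : (greg w - t * greg x) / (1 - t) <= greg x'.
  rewrite ler_pdivrMr // => h; lra.
apply: greg_ge => _ [y' fy' <-]; rewrite ler_pdivrMr //.
have := step1 y' fy'; lra.
Qed.

Lemma greg_x0 x0 a' d0 : 0 < d0 ->
  (forall w, `|w - x0| < d0 -> (a'%:E < phi w)%E) ->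
  a' - c + K * `|x0 - x1| <= (k - K) * d0 -> a' <= greg x0.
Proof.
move=> d00 hw hk; apply: greg_ge => _ [y fy <-].
have nk : 0 <= k * `|x0 - y| by rewrite mulr_ge0.
case: (ltP `|y - x0| d0) => h.
  have := hw y h; rewrite -(fineK fy) lte_fin => hy; lra.
have := lb y; rewrite -(fineK fy) lee_fin => hy.
have tri : `|y - x1| <= `|y - x0| + `|x0 - x1| by exact: ler_distD.
have h1 : K * `|y - x1| <= K * (`|y - x0| + `|x0 - x1|) by rewrite ler_wpM2l.
have h2 : (k - K) * d0 <= (k - K) * `|y - x0| by rewrite ler_wpM2l // subr_ge0.
have e : `|x0 - y| = `|y - x0| by rewrite distrC.
rewrite e in nk *.
lra.
Qed.

End Reg.

End CFM.
Section CFM2.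
Context {R : realType} {X : normedModType R} (phi : X -> \bar R).
Hypotheses (phic : convex_on setT phi)
  (phil : lsc_on setT (fun x : X => `|x|) phi) (phip : proper_on setT phi).

Lemma conj_le (f : X -> R^o) (b : R) :
  (forall x, phi x \is a fin_num -> f x - fine (phi x) <= b) ->
  (conjugate phi f <= b%:E)%E.
Proof.
move=> h; apply: ge_ereal_sup => _ [x _ <-].
have := @phi_nNy R X phi phip x.
case E: (phi x) => [p| |] // _; last by rewrite /= leNye.
by have := h x; rewrite E => /(_ isT) /=; rewrite lee_fin.
Qed.

Lemma conj_ge (f : X -> R^o) x : ((f x)%:E - phi x <= conjugate phi f)%E.
Proof. by apply: ereal_sup_ubound; exists x. Qed.

Lemma CFM x0 (a : R) : (a%:E < phi x0)%E ->
  exists2 f : X -> R^o, dual_space f & (a%:E < (f x0)%:E - conjugate phi f)%E.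
Proof.
move=> ha.
have [a' aa' ha'] : exists2 a', a < a' & (a'%:E < phi x0)%E.
  have := @phi_nNy R X phi phip x0.
  case E: (phi x0) ha => [p| |] // hp _.
    rewrite lte_fin in hp.
    by exists ((a + p) / 2); rewrite ?lte_fin; lra.
  by exists (a + 1); [lra | exact: ltry].
have [d0 d00 hd0] := phil x0 I a' ha'.
have [x1 [c [K [K0 fx1 lb]]]] := @phi_lb R X phi phic phil phip.
set k := K + `|a' - c + K * `|x0 - x1| | / d0.
have Kk : K <= k by rewrite /k lerDl divr_ge0 // ltW.
have k0 : 0 <= k by exact: le_trans Kk.
have hk : a' - c + K * `|x0 - x1| <= (k - K) * d0.
  have -> : (k - K) * d0 = `|a' - c + K * `|x0 - x1| | by rewrite /k; field; rewrite gt_eqF.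
  exact: ler_norm.
set g := greg phi k.
have gx0 : a' <= g x0.
  apply: (@greg_x0 R X phi x1 c K k K0 Kk fx1 lb x0 a' d0 d00) => // w hw.
  exact: hd0.
have glip := @greg_lip R X phi x1 c K k K0 Kk fx1 lb.
have gconv := @greg_conv R X phi phic phip x1 c K k K0 Kk fx1 lb.
have gphi := @greg_phi R X phi x1 c K k K0 Kk lb.
pose G v := g (x0 + v) - g x0.
have Gconv : forall x y (t : R), 0 < t < 1 ->
    G (t *: x + (1 - t) *: y) <= t * G x + (1 - t) * G y.
  move=> x y t t01; rewrite /G.
  have -> : x0 + (t *: x + (1 - t) *: y) = t *: (x0 + x) + (1 - t) *: (x0 + y).
    have e1 : t + (1 - t) = 1 by ring.
    by rewrite !scalerDr addrACA -scalerDl e1 scale1r.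
  have := gconv (x0 + x) (x0 + y) t t01; rewrite -/g => h.
  lra.
have G0 : 0 <= G 0 by rewrite /G addr0 subrr.
have [f [lf fG]] := @HB_exists R X G Gconv G0.
have lf' : is_linear_functional (f : X -> R^o) by [].
have fb : forall v, `|f v| <= k * `|v|.
  move=> v; rewrite ler_norml; apply/andP; split.
    have := fG (- v); rewrite (@linN R X f lf') /G => h.
    have := glip (x0 - v) x0; rewrite addrAC subrr add0r normrN => h2.
    lra.
  have := fG v; rewrite /G => h.
  have := glip (x0 + v) x0; rewrite addrAC subrr add0r => h2.
  lra.
exists (f : X -> R^o).
  by split => //; exact: (@lin_bound_cont R X f lf' k fb).
have hc : (conjugate phi f <= (f x0 - g x0)%:E)%E.
  apply: conj_le => x fx.
  have := fG (x - x0); rewrite /G (addrC x0) subrK (@linB R X f lf') => h.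
  have := gphi x fx; rewrite -/g => h2.
  lra.
move: hc; case: (conjugate phi f) => [r| |] //.
  rewrite !lee_fin => hr; rewrite -EFinB lte_fin; lra.
by rewrite /= ltry.
Qed.

End CFM2.
Section DualNorm.
Context {R : realType} {X : normedModType R}.
Implicit Types (f g : X -> R^o).

Lemma fctZE (s : R) f x : (s *: f) x = s * f x. Proof. by []. Qed.
Lemma fctNE f x : (- f) x = - f x. Proof. by []. Qed.
Lemma fctBE f g x : (f - g) x = f x - g x. Proof. by []. Qed.
Lemma fct0E x : (0 : X -> R^o) x = 0. Proof. by []. Qed.

Lemma dual_lin f : dual_space f -> is_linear_functional f.
Proof. by case. Qed.

Lemma dual_bound f : dual_space f -> exists2 C, 0 < C & forall x, `|f x| <= C * `|x|.
Proof. by case=> lf cf; exact: (@lin_cont_bound R X f lf cf). Qed.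

Lemma dual_of_bound f C : is_linear_functional f ->
  (forall x, `|f x| <= C * `|x|) -> dual_space f.
Proof. by move=> lf fb; split => //; exact: (@lin_bound_cont R X f lf C fb). Qed.

Lemma dual0 : dual_space (0 : X -> R^o).
Proof.
apply: (@dual_of_bound _ 0).
  by move=> a x y; rewrite !fct0E mulr0 addr0.
by move=> x; rewrite fct0E normr0 mul0r.
Qed.

Lemma dualZ (s : R) f : dual_space f -> dual_space (s *: f).
Proof.
move=> df; have [C C0 fb] := dual_bound _ df; have lf := dual_lin _ df.
apply: (@dual_of_bound _ (`|s| * C)).
  by move=> a x y; rewrite !fctZE lf; ring.
by move=> x; rewrite fctZE normrM -mulrA ler_wpM2l.
Qed.

Lemma dualN f : dual_space f -> dual_space (- f).
Proof.
move=> df; have [C C0 fb] := dual_bound _ df; have lf := dual_lin _ df.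
apply: (@dual_of_bound _ C).
  by move=> a x y; rewrite !fctNE lf; ring.
by move=> x; rewrite fctNE normrN.
Qed.

Lemma dualB f g : dual_space f -> dual_space g -> dual_space (f - g).
Proof.
move=> df dg; have [C C0 fb] := dual_bound _ df; have lf := dual_lin _ df.
have [C' C0' gb] := dual_bound _ dg; have lg := dual_lin _ dg.
apply: (@dual_of_bound _ (C + C')).
  by move=> a x y; rewrite !fctBE lf lg; ring.
move=> x; rewrite fctBE; apply: (le_trans (ler_normB _ _)).
by rewrite mulrDl lerD.
Qed.

Definition Sd f := [set `|f x| | x in [set x : X | `|x| <= 1]].

Lemma Sd_ne f : Sd f !=set0.
Proof. by exists `|f 0|, 0 => //=; rewrite normr0. Qed.

Lemma Sd_ub f : dual_space f -> has_ubound (Sd f).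
Proof.
move=> df; have [C C0 fb] := dual_bound _ df.
exists C => _ [x /= x1 <-]; apply: (le_trans (fb x)).
by rewrite ger_pMr.
Qed.

Lemma dn_ge0 f : dual_space f -> 0 <= dual_norm f.
Proof.
move=> df.
have h : Sd f `|f 0| by exists 0 => //=; rewrite normr0.
have h2 : `|f 0| <= dual_norm f by apply: (ub_le_sup (Sd_ub _ df)).
exact: le_trans (normr_ge0 _) h2.
Qed.

Lemma dn_bound f x : dual_space f -> `|f x| <= dual_norm f * `|x|.
Proof.
move=> df; have lf := dual_lin _ df.
have [->|x0] := eqVneq x 0; first by rewrite (lin0 _ lf) !normr0 mulr0.
have nx : 0 < `|x| by rewrite normr_gt0.
have : Sd f `|f (`|x|^-1 *: x)|.
  exists (`|x|^-1 *: x) => //=.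
  by rewrite normrZ normrV ?unitfE ?gt_eqF // normr_id mulVf ?gt_eqF.
move=> /(ub_le_sup (Sd_ub _ df)).
rewrite (linZ _ lf) normrM normrV ?unitfE ?gt_eqF // normr_id.
by rewrite ler_pdivrMl // mulrC.
Qed.

Lemma dn_le f C : 0 <= C -> (forall x, `|f x| <= C * `|x|) -> dual_norm f <= C.
Proof.
move=> C0 fb; apply: ge_sup; first exact: Sd_ne.
move=> _ [x /= x1 <-]; apply: (le_trans (fb x)).
by rewrite ler_piMr.
Qed.

Lemma dn_gt f r : dual_space f -> r < dual_norm f ->
  exists x, `|x| <= 1 /\ r < f x.
Proof.
move=> df; have lf := dual_lin _ df.
move=> /(sup_gt (Sd_ne f)) [_ [x /= x1 <-]] rx.
have [fx0|fx0] := leP 0 (f x).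
  by exists x; split => //; rewrite -(ger0_norm fx0).
exists (- x); split; first by rewrite normrN.
by rewrite (linN _ lf) -ltr0_norm.
Qed.

Lemma dn_scale f s : dual_space f -> 0 < s -> s * dual_norm f <= dual_norm (s *: f).
Proof.
move=> df s0; have dsf := dualZ s _ df.
rewrite mulrC -ler_pdivlMr //; apply: dn_le.
  by rewrite divr_ge0 // ?dn_ge0 // ltW.
move=> x; have := dn_bound _ x dsf; rewrite fctZE.
rewrite normrM gtr0_norm // => h.
rewrite mulrAC ler_pdivlMr // mulrC; exact: h.
Qed.

End DualNorm.
Arguments dual_lin {R X f}.
Arguments dual_bound {R X f}.
Arguments dualZ {R X} s {f}.
Arguments dualN {R X f}.
Arguments dualB {R X f g}.
Arguments Sd_ub {R X f}.
Arguments dn_ge0 {R X f}.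
Arguments dn_bound {R X f} x.
Arguments dn_gt {R X f r}.
Arguments dn_scale {R X f s}.

Lemma growth {R : realType} {V : lmodType R} (D : set V) (N : V -> R)
  (psi : V -> \bar R) (r : R) :
  convex_on D psi -> D 0 -> psi 0 = 0%E ->
  (forall v, D v -> (0 <= psi v)%E) ->
  (forall v s, D v -> 0 < s -> D (s *: v)) ->
  (forall v s, D v -> 0 < s -> s * N v <= N (s *: v)) ->
  (forall v, D v -> r < N v -> (1%:E < psi v)%E) ->
  forall v, D v -> ((N v / (`|r| + 1) - 1)%:E <= psi v)%E.
Proof.
move=> pc D0 p0 pge0 Dsc Nsc pco v Dv.
set R0 := `|r| + 1.
have R00 : 0 < R0 by rewrite ltr_wpDl.
have [hN|hN] := leP (N v) R0.
  by apply: le_trans _ (pge0 v Dv); rewrite lee_fin subr_le0 ler_pdivrMr // mul1r.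
have Nv0 : 0 < N v by exact: lt_trans R00 hN.
set s := R0 / N v.
have s0 : 0 < s by rewrite divr_gt0.
have s1 : s < 1 by rewrite ltr_pdivrMr // mul1r.
have hs : r < N (s *: v).
  apply: lt_le_trans _ (Nsc v s Dv s0).
  have -> : s * N v = R0 by rewrite /s mulrVK ?unitfE ?gt_eqF.
  by rewrite /R0 (le_lt_trans (ler_norm r)) // ltrDl.
have h1 := pco _ (Dsc v s Dv s0) hs.
have h2 := pc v 0 s Dv D0 (introT andP (conj s0 s1)).
rewrite scaler0 addr0 p0 mule0 adde0 in h2.
have h3 := lt_le_trans h1 h2.
have := pge0 v Dv.
case E: (psi v) h3 => [p| |] //; last by move=> _ _; exact: leey.
rewrite -EFinM lte_fin lee_fin => h3 _.
have : s^-1 < p.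
  by rewrite -(ltr_pM2l s0) mulfV ?gt_eqF.
rewrite /s invf_div => h4.
rewrite lee_fin lerBlDr; apply: le_trans (ltW h4) _; by rewrite lerDl ler01.
Qed.

Lemma key_real {R : realType} (R0 d e u w p : R) : 0 < R0 -> 0 < e ->
  0 <= u -> u <= d -> 0 <= w -> 0 <= p -> w <= R0 * (p + 1) ->
  4 * R0 * d <= e -> 2 * R0 * d <= 1 -> u * w - p <= e / 2.
Proof.
move=> R00 e0 u0 ud w0 p0 wp hd1 hd2.
have h1 : u * w <= d * w by rewrite ler_wpM2r.
have [hw|hw] := leP w (2 * R0).
  have h2 : d * w <= d * (2 * R0) by rewrite ler_wpM2l // (le_trans u0).
  nra.
have h3 : d * w * (2 * R0) <= w by nra.
nra.
Qed.
Lemma pmuly {R : realType} {t : R} : 0 < t -> (t%:E * +oo = +oo)%E.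
Proof. by move=> t0; rewrite mulry gtr0_sg // mul1e. Qed.

Section PartA.
Context {R : realType} {X : normedModType R} (phi : X -> \bar R).
Hypothesis (HO : Orlicz_on setT (fun x : X => `|x|) phi).

Let pe := HO.1.
Let pc := HO.2.1.
Let pl := HO.2.2.1.
Let pp := HO.2.2.2.1.
Let p0l := HO.2.2.2.2.1.
Let pco := HO.2.2.2.2.2.

Lemma pA_phi0 : phi 0 = 0%E.
Proof.
have n0 : `|0 : X| = 0 by rewrite normr0.
case E: (phi 0) => [p| |].
- case: (ltgtP p 0) => [hn|hp|->] //.
    have hp' : 0 < - p by rewrite oppr_gt0.
    have [d d0 /(_ 0 I)] := p0l (- p) hp'.
    by rewrite n0 E => /(_ d0) [+ _]; rewrite EFinN oppeK ltxx.
  have [d d0 /(_ 0 I)] := p0l p hp.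
  by rewrite n0 E => /(_ d0) [_]; rewrite ltxx.
- have [d d0 /(_ 0 I)] := p0l 1 ltr01.
  by rewrite n0 E => /(_ d0) [_].
- by have [h _] := pp; have := h 0 I; rewrite E.
Qed.

Lemma pA_ge0 x : (0 <= phi x)%E.
Proof.
have t01 : 0 < (1 / 2 : R) < 1 by apply/andP; split; lra.
have h := pc x (- x) (1 / 2) I I t01.
have e : 1 - 1 / 2 = 1 / 2 :> R by field.
rewrite e scalerN subrr pA_phi0 (pe x I) in h.
have [hn _] := pp; have := hn x I.
case E: (phi x) h => [p| |]; [|by move=> _ _; exact: leey|by move=> _; rewrite eqxx].
by rewrite -!EFinM -EFinD !lee_fin => h _; lra.
Qed.

Lemma pA_conj_ge0 {z : X -> R^o} : dual_space z -> (0 <= conjugate phi z)%E.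
Proof.
move=> dz; apply: le_trans (conj_ge phi z 0).
by rewrite (lin0 _ (dual_lin dz)) pA_phi0 sube0.
Qed.

Lemma pA_grow : exists2 R0, 0 < R0 & forall x, ((`|x| / R0 - 1)%:E <= phi x)%E.
Proof.
have [r hr] := pco 1.
exists (`|r| + 1); first by rewrite ltr_wpDl.
move=> x.
apply: (@growth R X setT (fun x => `|x|) phi r pc I pA_phi0 (fun v _ => pA_ge0 v)) => //.
by move=> v s _ s0; rewrite normrZ gtr0_norm.
Qed.

Lemma EFinBy (r : R) : (r%:E - +oo = -oo)%E. Proof. by []. Qed.

Lemma partA : Orlicz_on (@dual_space R X) (@dual_norm R X) (conjugate phi).
Proof.
have [pn _] := pp.
split; [|split; [|split; [|split; [|split]]]].
- move=> z dz; have lz := dual_lin dz.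
  apply/eqP; rewrite eq_le; apply/andP; split;
    apply: ge_ereal_sup => _ [x _ <-]; apply: ereal_sup_ubound; exists (- x) => //.
    by rewrite (linN _ lz) (pe x I).
  by rewrite fctNE (linN _ lz) opprK (pe x I).
- move=> z w t dz dw /andP[t0 t1].
  apply: ge_ereal_sup => _ [x _ <-].
  have hz := conj_ge phi z x; have hw := conj_ge phi w x.
  have nz := pA_conj_ge0 dz; have nw := pA_conj_ge0 dw.
  have e : (t *: z + (1 - t) *: w) x = t * z x + (1 - t) * w x by [].
  rewrite e.
  have := pn x I.
  case E: (phi x) hz hw => [p| |]; last by rewrite eqxx.
    have t1' : 0 < 1 - t by rewrite subr_gt0.
    case Cz: (conjugate phi z) nz => [cz| |] // _;
    case Cw: (conjugate phi w) nw => [cw| |] // _.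
    + rewrite -!EFinM -EFinD -!EFinB !lee_fin => hz hw _; nra.
    + by move=> _ _ _; rewrite (pmuly t1') addey // leey.
    + by move=> _ _ _; rewrite (pmuly t0) addye // leey.
    + by move=> _ _ _; rewrite (pmuly t0) (pmuly t1') addye // leey.
  by move=> _ _ _; rewrite EFinBy leNye.
- move=> z dz a; rewrite /conjugate => /ereal_sup_gt [_ [x _ <-] hx].
  have := pn x I.
  case E: (phi x) hx => [p| |] //.
  rewrite -EFinB lte_fin => hx _.
  set eta := z x - p - a.
  have eta0 : 0 < eta by rewrite /eta; lra.
  have nx1 : 0 < `|x| + 1 by rewrite ltr_wpDl.
  exists (eta / (`|x| + 1)); first by rewrite divr_gt0.
  move=> w dw hwz.
  apply: (lt_le_trans _ (conj_ge phi w x)); rewrite E -EFinB lte_fin.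
  have dwz := dualB dw dz.
  have b := dn_bound x dwz; rewrite fctBE in b.
  have b2 : dual_norm (w - z) * `|x| <= eta / (`|x| + 1) * `|x|.
    by rewrite ler_wpM2r // ltW.
  have b3 : eta / (`|x| + 1) * `|x| < eta.
    rewrite mulrAC ltr_pdivrMr // ltr_pM2l //; lra.
  have b4 := ler_norm (z x - w x); rewrite distrC in b4.
  have eeta : eta = z x - p - a by [].
  lra.
- split; first by move=> z dz; have := pA_conj_ge0 dz; case: (conjugate phi z).
  exists (0%R : X -> R^o); split; first exact: dual0.
  have : (conjugate phi (0%R : X -> R^o) <= 0%:E)%E.
    apply: (conj_le phi pp) => x fx; rewrite fct0E.
    have := pA_ge0 x; rewrite -(fineK fx) lee_fin; lra.
  by case: (conjugate phi (0%R : X -> R^o)).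
- move=> e e0.
  have [R0 R00 hg] := pA_grow.
  pose d := Order.min (e / (4 * R0)) (1 / (2 * R0)).
  have d0 : 0 < d by rewrite lt_min !divr_gt0 // ?mulr_gt0.
  have hd1 : 4 * R0 * d <= e.
    have : d <= e / (4 * R0) by rewrite ge_min lexx.
    by rewrite ler_pdivlMr ?mulr_gt0 // mulrC.
  have hd2 : 2 * R0 * d <= 1.
    have : d <= 1 / (2 * R0) by rewrite ge_min lexx orbT.
    by rewrite ler_pdivlMr ?mulr_gt0 // mulrC.
  exists d => // z dz hz; split.
    apply: (lt_le_trans _ (pA_conj_ge0 dz)).
    by rewrite -EFinN lte_fin oppr_lt0.
  apply: (le_lt_trans (conj_le phi pp z (e / 2) _)); last by rewrite lte_fin; lra.
  move=> x fx.
  set p := fine (phi x).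
  have p0 : 0 <= p by have := pA_ge0 x; rewrite -(fineK fx) lee_fin.
  have hpg : `|x| <= R0 * (p + 1).
    have := hg x; rewrite -(fineK fx) lee_fin -/p.
    by rewrite lerBlDr ler_pdivrMr // mulrC.
  have zb := dn_bound x dz.
  have zx := ler_norm (z x).
  have := @key_real R R0 d e (dual_norm z) `|x| p R00 e0 (dn_ge0 dz) (ltW hz)
    (normr_ge0 _) p0 hpg hd1 hd2.
  lra.
- move=> M.
  have [d d0 hd] := p0l 1 ltr01.
  exists (2 * (`|M| + 1) / d) => z dz hr.
  have [x [x1 hx]] := dn_gt dz hr.
  set y := (d / 2) *: x.
  have hy : `|y| < d.
    rewrite normrZ gtr0_norm ?divr_gt0 //.
    have : d / 2 * `|x| <= d / 2 by rewrite ger_pMr // divr_gt0.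
    lra.
  have [_ hy1] := hd y I hy.
  have := pn y I.
  case E: (phi y) hy1 => [q| |] // hy1 _.
  apply: (lt_le_trans _ (conj_ge phi z y)); rewrite E -EFinB lte_fin.
  rewrite lte_fin in hy1.
  rewrite /y (linZ _ (dual_lin dz)).
  have : d / 2 * (2 * (`|M| + 1) / d) = `|M| + 1 by field; rewrite gt_eqF.
  have : d / 2 * (2 * (`|M| + 1) / d) < d / 2 * z x by rewrite ltr_pM2l // divr_gt0.
  have := ler_norm M.
  lra.
Qed.

End PartA.
Section Nrm.
Context {R : realType} {X : normedModType R}.
Definition nrm (x : X) : \bar R := (`|x|)%:E.

Lemma nrm_conv : convex_on setT nrm.
Proof.
move=> x y t _ _ /andP[t0 t1]; rewrite /nrm -!EFinM -EFinD lee_fin.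
apply: le_trans (ler_normD _ _) _.
by rewrite !normrZ !gtr0_norm // subr_gt0.
Qed.

Lemma nrm_lsc : lsc_on setT (fun x : X => `|x|) nrm.
Proof.
move=> z _ a; rewrite /nrm lte_fin => ha.
exists (`|z| - a); first by rewrite subr_gt0.
move=> w _ hw; rewrite lte_fin.
have := ler_distD w z 0; rewrite !subr0 distrC => h.
lra.
Qed.

Lemma nrm_proper : proper_on setT nrm.
Proof. by split => //; exists 0. Qed.
End Nrm.

Section PartB.
Context {R : realType} {X : normedModType R} (phi : X -> \bar R).
Hypotheses (phic : convex_on setT phi)
  (phil : lsc_on setT (fun x : X => `|x|) phi) (phip : proper_on setT phi).
Hypothesis (HC : Orlicz_on (@dual_space R X) (@dual_norm R X) (conjugate phi)).

Let ce := HC.1.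
Let cc := HC.2.1.
Let cp := HC.2.2.2.1.
Let c0l := HC.2.2.2.2.1.
Let cco := HC.2.2.2.2.2.

Lemma dn0 : dual_norm (0%R : X -> R^o) = 0.
Proof.
apply/le_anti/andP; split; last exact: dn_ge0 dual0.
by apply: dn_le => // x; rewrite fct0E normr0 mul0r.
Qed.

Lemma pB_conj0 : conjugate phi 0%R = 0%E.
Proof.
have n0 := dn0.
case E: (conjugate phi 0%R) => [p| |].
- case: (ltgtP p 0) => [hn|hp|->] //.
    have hp' : 0 < - p by rewrite oppr_gt0.
    have [d d0 /(_ 0%R dual0)] := c0l (- p) hp'.
    by rewrite n0 E => /(_ d0) [+ _]; rewrite EFinN oppeK ltxx.
  have [d d0 /(_ 0%R dual0)] := c0l p hp.
  by rewrite n0 E => /(_ d0) [_]; rewrite ltxx.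
- have [d d0 /(_ 0%R dual0)] := c0l 1 ltr01.
  by rewrite n0 E => /(_ d0) [_].
- by have [h _] := cp; have := h 0%R dual0; rewrite E.
Qed.

Lemma pB_conj_ge0 {f : X -> R^o} : dual_space f -> (0 <= conjugate phi f)%E.
Proof.
move=> df.
have t01 : 0 < (1 / 2 : R) < 1 by apply/andP; split; lra.
have h := cc f (- f) (1 / 2) df (dualN df) t01.
have e : 1 - 1 / 2 = 1 / 2 :> R by field.
rewrite e scalerN subrr pB_conj0 (ce f df) in h.
have [hn _] := cp; have := hn f df.
case E: (conjugate phi f) h => [p| |]; [|by move=> _ _; exact: leey|by move=> _; rewrite eqxx].
by rewrite -!EFinM -EFinD !lee_fin => h _; lra.
Qed.

Lemma pB_ge0 x : (0 <= phi x)%E.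
Proof.
have := conj_ge phi 0%R x; rewrite pB_conj0 fct0E.
have [hn _] := phip; have := hn x I.
by case: (phi x) => [p| |] //; rewrite -EFinB lee_fin => _ h; rewrite lee_fin; lra.
Qed.

Lemma pB_grow : exists2 R0, 0 < R0 & forall f, dual_space f ->
  ((dual_norm f / R0 - 1)%:E <= conjugate phi f)%E.
Proof.
have [r hr] := cco 1.
exists (`|r| + 1); first by rewrite ltr_wpDl.
move=> f df.
apply: (@growth R _ (@dual_space R X) (@dual_norm R X) (conjugate phi) r cc dual0 pB_conj0
  (fun v dv => pB_conj_ge0 dv)) => //.
- by move=> v s dv _; exact: dualZ.
- by move=> v s dv s0; exact: dn_scale.
Qed.

Lemma FY_lt (f : X -> R^o) x (a : R) : dual_space f ->
  (a%:E < (f x)%:E - conjugate phi f)%E -> (a%:E < phi x)%E.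
Proof.
move=> df ha; have hc := conj_ge phi f x.
have c0 := pB_conj_ge0 df.
have [hn _] := phip; have := hn x I.
case E: (phi x) hc => [p| |] //; last by move=> _ _; exact: ltry.
case C: (conjugate phi f) ha c0 => [c| |] //.
by rewrite -EFinB !lee_fin !lte_fin => ha _ hc _; lra.
Qed.

Lemma partB : Orlicz_on setT (fun x : X => `|x|) phi.
Proof.
have [pn _] := phip.
have half : forall x (a : R), (a%:E < phi (- x)%R)%E -> (a%:E < phi x)%E.
  move=> x a /(CFM phi phic phil phip) [f df ha].
  apply: (FY_lt (- f) x a (dualN df)).
  by rewrite (ce f df) fctNE -(linN _ (dual_lin df)).
have half2 : forall x, (phi (- x)%R <= phi x)%E.
  move=> x; have := pn x I.
  case E: (phi x) => [q| |]; [|by move=> _; exact: leey|by rewrite eqxx].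
  by move=> _; rewrite leNgt; apply/negP => /half; rewrite E ltxx.
split; [|split; [|split; [|split; [|split]]]] => //.
- move=> x _; apply/le_anti/andP; split => //.
  by have := half2 (- x); rewrite opprK.
- move=> e e0.
  have [R0 R00 hg] := pB_grow.
  pose d := Order.min (e / (4 * R0)) (1 / (2 * R0)).
  have d0 : 0 < d by rewrite lt_min !divr_gt0 // ?mulr_gt0.
  have hd1 : 4 * R0 * d <= e.
    have : d <= e / (4 * R0) by rewrite ge_min lexx.
    by rewrite ler_pdivlMr ?mulr_gt0 // mulrC.
  have hd2 : 2 * R0 * d <= 1.
    have : d <= 1 / (2 * R0) by rewrite ge_min lexx orbT.
    by rewrite ler_pdivlMr ?mulr_gt0 // mulrC.
  exists d => // x _ hx; split.
    apply: (lt_le_trans _ (pB_ge0 x)).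
    by rewrite -EFinN lte_fin oppr_lt0.
  rewrite ltNge; apply/negP => hge.
  have : ((e / 2)%:E < phi x)%E by apply: lt_le_trans hge; rewrite lte_fin; lra.
  move=> /(CFM phi phic phil phip) [f df ha].
  have c0 := pB_conj_ge0 df.
  have hgf := hg f df.
  case C: (conjugate phi f) ha c0 hgf => [c| |] //.
  rewrite -EFinB !lte_fin !lee_fin => ha c0 hgf.
  have hpg : dual_norm f <= R0 * (c + 1).
    by move: hgf; rewrite lerBlDr ler_pdivrMr // mulrC.
  have fb := dn_bound x df.
  have fx := ler_norm (f x).
  have := @key_real R R0 d e `|x| (dual_norm f) c R00 e0 (normr_ge0 _) (ltW hx)
    (dn_ge0 df) c0 hpg hd1 hd2.
  lra.
- move=> M.
  have [d d0 hd] := c0l 1 ltr01.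
  exists (1 + 2 * (`|M| + 1) / d) => x _ hr.
  have : ((`|x| - 1)%:E < nrm x)%E by rewrite /nrm lte_fin; lra.
  move=> /(CFM nrm nrm_conv nrm_lsc nrm_proper) [f df ha].
  have lf := dual_lin df.
  have c0 : (0 <= conjugate nrm f)%E.
    have := conj_ge nrm f 0; rewrite (lin0 _ lf) /nrm normr0 sube0 //.
  case C: (conjugate nrm f) ha c0 => [c| |] //.
  rewrite -EFinB !lte_fin lee_fin => ha c0.
  have fb : forall y, f y <= `|y|.
    move=> y; rewrite leNgt; apply/negP => hy.
    set eta := f y - `|y|.
    have eta0 : 0 < eta by rewrite subr_gt0.
    set m := (c + 1) / eta.
    have m0 : 0 < m by rewrite divr_gt0 //; lra.
    have := conj_ge nrm f (m *: y); rewrite C /nrm -EFinB lee_fin (linZ _ lf).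
    rewrite normrZ gtr0_norm //.
    have : m * eta = c + 1 by rewrite /m; field; rewrite gt_eqF.
    rewrite /eta; lra.
  have fb2 : forall y, `|f y| <= `|y|.
    move=> y; rewrite ler_norml fb andbT.
    by have := fb (- y); rewrite (linN _ lf) normrN; lra.
  set g := (d / 2) *: f.
  have d2 : 0 < d / 2 by rewrite divr_gt0.
  have dg : dual_space g by exact: dualZ.
  have hg : dual_norm g < d.
    apply: (@le_lt_trans _ _ (d / 2)); last by lra.
    apply: dn_le; first exact: ltW.
    move=> y; rewrite /g fctZE normrM gtr0_norm // ler_pM2l //.
  have [_ hg1] := hd g dg hg.
  have cg0 := pB_conj_ge0 dg.
  case Cg: (conjugate phi g) hg1 cg0 => [cg| |] //.
  rewrite lte_fin lee_fin => hg1 cg0.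
  have hc := conj_ge phi g x; rewrite Cg /g fctZE in hc.
  have := pn x I.
  case E: (phi x) hc => [p| |] //; last by move=> _ _; exact: ltry.
  rewrite -EFinB !lee_fin lte_fin => hc _.
  have h1 : d / 2 * (`|x| - 1) <= d / 2 * f x.
    by rewrite ler_pM2l //; lra.
  have h2 : d / 2 * (2 * (`|M| + 1) / d) = `|M| + 1 by field; rewrite gt_eqF.
  have h3 : d / 2 * (2 * (`|M| + 1) / d) < d / 2 * (`|x| - 1).
    by rewrite ltr_pM2l //; lra.
  have := ler_norm M.
  lra.
Qed.

End PartB.

Theorem lemma3p2p3 (R : realType) (X : completeNormedModType R)
  (phi : X -> \bar R) :
  convex_on setT phi ->
  lsc_on setT (fun x : X => `|x|) phi ->
  proper_on setT phi ->
  (Orlicz_on setT (fun x : X => `|x|) phi <->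
   Orlicz_on (@dual_space R X) (@dual_norm R X) (conjugate phi)).
Proof.
move=> phic phil phip; split; first exact: partA.
exact: partB.
Qed.
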